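(* Let $p\colon E\to B$ be a regular arc-covering with $E$ path-connected, let $e_0\in E$ and $b_0=p(e_0)$. Then there is a natural monomorphism $DTG(p)\to \pi(p,b_0)$ (sending a deck transformation $h$ to the class of $p\circ\alpha_h$, where $\alpha_h$ is any path in $E$ from $e_0$ to $h(e_0)$). This monomorphism is an isomorphism if $DTG(p)$ acts transitively on the fibers of $p$.
   Context: All maps are continuous. A map $p\colon E\to B$ is an arc-covering if for every $e_0\in E$, $t_0\in[0,1]$ and map $f\colon[0,1]\to B$ with $f(t_0)=p(e_0)$ there is a unique map $g\colon[0,1]\to E$ with $p\circ g=f$ and $g(t_0)=e_0$ (a lift). An arc-covering is regular if for every loop $\alpha$ in $B$ either all lifts of $\alpha$ are loops or none of them are. The monodromy group $\pi(p,b_0)$ is the set of equivalence classes of loops in $B$ at $b_0$, where $\alpha\sim\beta$ iff for any lifts $\tilde\alpha,\tilde\beta$ with $\tilde\alpha(0)=\tilde\beta(0)$ one has $\tilde\alpha(1)=\tilde\beta(1)$; the group operation is $[\alpha]\cdot[\beta]=[\alpha\ast\beta]$ (concatenation). The deck transformation group $DTG(p)$ is the group of homeomorphisms $h\colon E\to E$ with $p\circ h=p$. *)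

(* Defs.v *)
From HB Require Import structures.
From mathcomp Require Import all_boot all_order all_algebra.
From mathcomp Require Import all_classical all_reals topology set_interval.
From mathcomp Require Import Rstruct Rstruct_topology.
Set Implicit Arguments. Unset Strict Implicit. Unset Printing Implicit Defensive.
Import Order.TTheory GRing.Theory Num.Theory.
Local Open Scope classical_set_scope.
Local Open Scope ring_scope.

Notation I01 := (`[0%R, 1%R]%classic : set Rdefinitions.R).

(* a path in T: a map [0,1] -> T (represented as a map R -> T, only its
   values on [0,1] matter) that is continuous on [0,1] (subspace topology) *)
Definition is_path (T : topologicalType) (f : Rdefinitions.R -> T) : Prop :=
  {within I01, continuous f}.

Definition path_from_to (T : topologicalType) (f : Rdefinitions.R -> T) (x y : T) :=
  is_path f /\ f 0 = x /\ f 1 = y.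

Definition loop_at (T : topologicalType) (f : Rdefinitions.R -> T) (x : T) :=
  path_from_to f x x.

Definition path_connected_space (T : topologicalType) : Prop :=
  forall x y : T, exists f, path_from_to f x y.

Definition lift_of (E B : topologicalType) (p : E -> B)
  (f : Rdefinitions.R -> B) (g : Rdefinitions.R -> E) : Prop :=
  is_path g /\ forall t, I01 t -> p (g t) = f t.

Definition arc_covering (E B : topologicalType) (p : E -> B) : Prop :=
  continuous p /\
  forall (e0 : E) (t0 : Rdefinitions.R) (f : Rdefinitions.R -> B),
    I01 t0 -> is_path f -> f t0 = p e0 ->
    (exists g, lift_of p f g /\ g t0 = e0) /\
    (forall g1 g2, lift_of p f g1 -> g1 t0 = e0 ->
                   lift_of p f g2 -> g2 t0 = e0 ->
                   forall t, I01 t -> g1 t = g2 t).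

Definition regular_arc_covering (E B : topologicalType) (p : E -> B) : Prop :=
  arc_covering p /\
  forall (b : B) (a : Rdefinitions.R -> B), loop_at a b ->
    (forall g, lift_of p a g -> g 0 = g 1) \/
    (forall g, lift_of p a g -> g 0 <> g 1).

(* the equivalence relation defining the monodromy group pi(p, b0) *)
Definition mono_equiv (E B : topologicalType) (p : E -> B)
  (a b : Rdefinitions.R -> B) : Prop :=
  forall ga gb, lift_of p a ga -> lift_of p b gb -> ga 0 = gb 0 -> ga 1 = gb 1.

Definition concat_path (T : Type) (a b : Rdefinitions.R -> T) : Rdefinitions.R -> T :=
  fun t => if t <= 1 / 2 then a (2 * t) else b (2 * t - 1).

Definition deck_transformation (E B : topologicalType) (p : E -> B) (h : E -> E) : Prop :=
  continuous h /\ (exists k : E -> E, continuous k /\ cancel h k /\ cancel k h) /\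
  (forall e, p (h e) = p e).

(* Main.v *)
Require Import Defs.
From HB Require Import structures.
From mathcomp Require Import all_boot all_order all_algebra.
From mathcomp Require Import all_classical all_reals topology set_interval normedtype.
From mathcomp Require Import Rstruct Rstruct_topology.
From mathcomp Require Import lra.
Import Order.TTheory GRing.Theory Num.Theory.
Local Open Scope classical_set_scope.
Local Open Scope ring_scope.

Notation RR := Rdefinitions.R.

Lemma aff_cont (a b : RR) : continuous (fun t : RR => a * t + b).
Proof. move=> x. apply: (@continuousD _ Rdefinitions.R^o).
exact: mulrl_continuous. exact: cst_continuous. Qed.

Set Implicit Arguments.
Lemma I01P (t : RR) : I01 t <-> (0 <= t /\ t <= 1).
Proof. rewrite /= in_itv /=; split; [by move/andP | by case=> -> ->]. Qed.

Lemma itvP (a b t : RR) : `[a, b]%classic t <-> (a <= t /\ t <= b).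
Proof. rewrite /= in_itv /=; split; [by move/andP | by case=> -> ->]. Qed.

Lemma within_comp (X Y Z : topologicalType) (A : set X) (B : set Y)
  (f : X -> Y) (g : Y -> Z) : set_fun A B f ->
  {within A, continuous f} -> {within B, continuous g} ->
  {within A, continuous (g \o f)}.
Proof.
move=> fAB cf cg.
have := @subspaceT_continuous _ _ A B (mkfun_fun fAB) cf.
move=> h x; exact: (continuous_comp (h x) (cg (f x))).
Qed.

Lemma within_ext (X Z : topologicalType) (A : set X) (f g : X -> Z) :
  {within A, continuous f} -> (forall t, A t -> f t = g t) ->
  {within A, continuous g}.
Proof.
move=> cf e; apply: (subspace_eq_continuous _ cf) => x /set_mem; exact: e.
Qed.

Lemma path_comp (T U : topologicalType) (g : RR -> T) (h : T -> U) :
  is_path g -> continuous h -> is_path (h \o g).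
Proof. move=> pg ch; apply: (@within_comp _ _ _ _ setT) => //; exact: continuous_subspaceT. Qed.

Lemma reparam (T : topologicalType) (g : RR -> T) (a b : RR) :
  is_path g -> (forall t, I01 t -> I01 (a * t + b)) ->
  is_path (g \o (fun t => a * t + b)).
Proof.
move=> pg fI; exact: (within_comp fI (continuous_subspaceT (aff_cont a b)) pg).
Qed.

Lemma cl_itv (a b : RR) : closed `[a,b]%classic.
Proof.
have -> : `[a,b]%classic = [set x | a <= x] `&` [set x | x <= b].
  by apply/seteqP; split=> x /=; rewrite in_itv /=; [move/andP | case=> -> ->].
apply: closedI; [exact: (@closed_ge RR) | exact: (@closed_le RR)].
Qed.

Lemma concat_is_path (T : topologicalType) (a b : RR -> T) :
  is_path a -> is_path b -> a 1 = b 0 -> is_path (concat_path a b).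
Proof.
move=> pa pb ab; rewrite /is_path.
have -> : I01 = `[0, 1/2]%classic `|` `[1/2, 1]%classic.
  apply/seteqP; split=> t.
    move/I01P=> [t0 t1]; case: (lerP t (1/2)) => ht.
      by left; apply/itvP.
    by right; apply/itvP; split=> //; lra.
  case=> /itvP [h1 h2]; apply/I01P; split; lra.
apply: withinU_continuous; [exact: cl_itv | exact: cl_itv | |].
- apply: (@within_ext _ _ _ (a \o (fun t => 2 * t + 0))).
    apply: (within_comp _ (continuous_subspaceT (aff_cont 2 0)) pa).
    move=> t /itvP [h1 h2]; apply/I01P; split; lra.
  move=> t /itvP [h1 h2]; rewrite /concat_path /= ifT ?addr0 //.
- apply: (@within_ext _ _ _ (b \o (fun t => 2 * t + -1))).
    apply: (within_comp _ (continuous_subspaceT (aff_cont 2 (-1))) pb).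
    move=> t /itvP [h1 h2]; apply/I01P; split; lra.
  move=> t /itvP [h1 h2]; rewrite /concat_path /=; case: ifP => ht.
    have -> : 2 * t = 1 by lra.
    by rewrite subrr ab.
  done.
Qed.

Lemma I0 : I01 (0 : RR). Proof. by apply/I01P; split; lra. Qed.
Lemma I1 : I01 (1 : RR). Proof. by apply/I01P; split; lra. Qed.

Lemma lift_uniq (E B : topologicalType) (p : E -> B) f g1 g2 (t0 : RR) :
  arc_covering p -> is_path f -> I01 t0 -> lift_of p f g1 -> lift_of p f g2 ->
  g1 t0 = g2 t0 -> forall t, I01 t -> g1 t = g2 t.
Proof.
move=> [_ H] pf It0 l1 l2 e t It.
have f0 : f t0 = p (g1 t0) by rewrite l1.2.
case: (H (g1 t0) t0 f It0 pf f0) => _ U.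
exact: (U g1 g2 l1 erefl l2 (esym e) t It).
Qed.

Lemma lift_ex (E B : topologicalType) (p : E -> B) f e (t0 : RR) :
  arc_covering p -> is_path f -> I01 t0 -> f t0 = p e ->
  exists g, lift_of p f g /\ g t0 = e.
Proof. by move=> [_ H] pf It0 fe; case: (H e t0 f It0 pf fe). Qed.

Lemma keyL (E B : topologicalType) (p : E -> B) (al be : RR -> B) (ga0 gb0 : RR -> E) :
  regular_arc_covering p -> is_path al -> is_path be ->
  lift_of p al ga0 -> lift_of p be gb0 -> ga0 0 = gb0 0 -> ga0 1 = gb0 1 ->
  mono_equiv p al be.
Proof.
move=> [ac reg] pal pbe la lb e0 e1.
have a1 : al 1 = be 1 by rewrite -(la.2 1 I1) -(lb.2 1 I1) e1.
have a0 : al 0 = be 0 by rewrite -(la.2 0 I0) -(lb.2 0 I0) e0.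
have fI : forall t : RR, I01 t -> I01 (-1 * t + 1).
  by move=> t /I01P [h1 h2]; apply/I01P; split; lra.
have prb := reparam pbe fI.
pose gam := concat_path al (be \o (fun t => -1 * t + 1)).
have pgam : is_path gam.
  apply: concat_is_path => //=; by rewrite mulr0 add0r.
have lgam : loop_at gam (al 0).
  split=> //; split.
    by rewrite /gam /concat_path ifT ?mulr0 //; lra.
  rewrite /gam /concat_path ifF /=; last by apply/negbTE; rewrite -ltNge; lra.
  by rewrite a0; congr be; lra.
have lg0 : lift_of p gam (concat_path ga0 (gb0 \o (fun t => -1 * t + 1))).
  split.
    apply: concat_is_path; [exact: la.1 | exact: reparam lb.1 fI |].
    by rewrite /= mulr0 add0r.
  move=> t /I01P [h1 h2]; rewrite /gam /concat_path; case: ifP => ht.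
    by apply: la.2; apply/I01P; split; lra.
  have ht' : 1/2 < t by rewrite ltNge ht.
  by apply: lb.2; apply/I01P; split; lra.
case: (reg _ _ lgam) => [Hl | Hr]; last first.
  exfalso; apply: (Hr _ lg0).
  rewrite /concat_path ifT; last by lra.
  rewrite ifF /=; last by apply/negbTE; rewrite -ltNge; lra.
  rewrite mulr0 e0; congr gb0; lra.
move=> u v lu lv euv.
have h0 : gam 0 = p (u 0) by rewrite (lu.2 0 I0) lgam.2.1.
have [g [lg g0]] := @lift_ex _ _ p gam (u 0) 0 ac pgam I0 h0.
have gl := Hl g lg.
have fI1 : forall t : RR, I01 t -> I01 (1/2 * t + 0).
  by move=> t /I01P [h1 h2]; apply/I01P; split; lra.
have fI2 : forall t : RR, I01 t -> I01 (-1/2 * t + 1).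
  by move=> t /I01P [h1 h2]; apply/I01P; split; lra.
have l1 : lift_of p al (g \o (fun t => 1/2 * t + 0)).
  split; first exact: reparam lg.1 fI1.
  move=> t It; rewrite /= lg.2; last exact: fI1.
  move/I01P: It => [h1 h2].
  rewrite /gam /concat_path ifT; last by lra.
  congr al; lra.
have l2 : lift_of p be (g \o (fun t => -1/2 * t + 1)).
  split; first exact: reparam lg.1 fI2.
  move=> t It; rewrite /= lg.2; last exact: fI2.
  move/I01P: It => [h1 h2].
  rewrite /gam /concat_path; case: ifP => ht.
    have -> : t = 1 by lra.
    rewrite -a1; congr al; lra.
  rewrite /=; congr be; lra.
have u1 : u 1 = g (1/2 * 1 + 0).
  apply: (@lift_uniq _ _ p al u _ 0 ac pal I0 lu l1 _ 1 I1).
  by rewrite /= mulr0 addr0 g0.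
have v1 : v 1 = g (-1/2 * 1 + 1).
  apply: (@lift_uniq _ _ p be v _ 0 ac pbe I0 lv l2 _ 1 I1).
  by rewrite /= mulr0 add0r -gl g0.
rewrite u1 v1; congr g; lra.
Qed.

Unset Implicit Arguments.

Theorem proposition2p10 (E B : topologicalType) (p : E -> B) (e0 : E) :
  regular_arc_covering p -> path_connected_space E ->
  (* the map h |-> [p \o alpha_h] is defined: such paths alpha_h exist *)
  (forall h, deck_transformation p h -> exists a, path_from_to a e0 (h e0)) /\
  (* it is well defined: independent of the choice of alpha_h *)
  (forall h a a', deck_transformation p h ->
     path_from_to a e0 (h e0) -> path_from_to a' e0 (h e0) ->
     mono_equiv p (p \o a) (p \o a')) /\
  (* it is a homomorphism: [p \o alpha_{h \o k}] = [p \o alpha_h] . [p \o alpha_k] *)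
  (forall h k a b c, deck_transformation p h -> deck_transformation p k ->
     path_from_to a e0 (h e0) -> path_from_to b e0 (k e0) ->
     path_from_to c e0 (h (k e0)) ->
     mono_equiv p (p \o c) (concat_path (p \o a) (p \o b))) /\
  (* it is injective *)
  (forall h k a b, deck_transformation p h -> deck_transformation p k ->
     path_from_to a e0 (h e0) -> path_from_to b e0 (k e0) ->
     mono_equiv p (p \o a) (p \o b) -> h = k) /\
  (* it is surjective when DTG(p) acts transitively on the fibers *)
  ((forall e e' : E, p e = p e' -> exists h, deck_transformation p h /\ h e = e') ->
   forall alpha, loop_at alpha (p e0) ->
   exists h a, deck_transformation p h /\ path_from_to a e0 (h e0) /\
     mono_equiv p alpha (p \o a)).
Proof.
move=> rac pc; have ac := rac.1; have cp := ac.1.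
have liftself : forall a, is_path a -> lift_of p (p \o a) a by move=> a pa; split.
split; first by move=> h _; exact: pc.
split.
  move=> h a a' _ [pa [a0 a1]] [pa' [a0' a1']].
  apply: (keyL rac (path_comp pa cp) (path_comp pa' cp) (liftself a pa) (liftself a' pa'));
    congruence.
split.
  move=> h k a b c [ch [_ hp]] _ [pa [a0 a1]] [pb [b0 b1]] [pc' [c0 c1]].
  have lconc : lift_of p (concat_path (p \o a) (p \o b)) (concat_path a (h \o b)).
    split.
      apply: concat_is_path => //; [exact: path_comp pb ch | by rewrite /= b0].
    by move=> t _; rewrite /concat_path; case: ifP => _ //=; rewrite hp.
  apply: (keyL rac (path_comp pc' cp) _ (liftself c pc') lconc).
  - apply: concat_is_path; [exact: path_comp pa cp | exact: path_comp pb cp |].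
    by rewrite /= a1 b0 hp.
  - by rewrite c0 /concat_path ifT ?mulr0 //; lra.
  - rewrite c1 /concat_path ifF /=; last by apply/negbTE; rewrite -ltNge; lra.
    have -> : 2 * 1 - 1 = 1 :> RR by lra.
    by rewrite b1.
split.
  move=> h k a b [ch [_ hp]] [ck [_ kp]] [pa [a0 a1]] [pb [b0 b1]] me.
  have hk0 : h e0 = k e0.
    by rewrite -a1 -b1; apply: me; [exact: liftself | exact: liftself | congruence].
  apply: funext => e.
  have [g [pg [g0 g1]]] := pc e0 e.
  have l1 : lift_of p (p \o g) (h \o g).
    by split; [exact: path_comp pg ch | move=> t _ /=; rewrite hp].
  have l2 : lift_of p (p \o g) (k \o g).
    by split; [exact: path_comp pg ck | move=> t _ /=; rewrite kp].
  have e00 : (h \o g) 0 = (k \o g) 0 by rewrite /= g0.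
  rewrite -g1.
  exact: (@lift_uniq _ _ p (p \o g) (h \o g) (k \o g) 0 ac (path_comp pg cp) I0 l1 l2 e00 1 I1).
move=> tr alpha [pal [al0 al1]].
have [g [lg g0]] := @lift_ex _ _ p alpha e0 0 ac pal I0 al0.
have pg : p (g 1) = p e0 by rewrite lg.2 ?al1 //; exact: I1.
have [h [dh he]] := tr e0 (g 1) (esym pg).
exists h, g; split=> //; split; first by split; [exact: lg.1 | rewrite g0 he].
move=> u v lu lv uv.
have lv' : lift_of p alpha v.
  by split; [exact: lv.1 | move=> t It; rewrite lv.2 // /= lg.2].
exact: (@lift_uniq _ _ p alpha u v 0 ac pal I0 lu lv' uv 1 I1).
Qed.
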